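(* For every $i,j\in[K]$, $$\boldsymbol\tau^\star_{\mathrm{lin}}(\mathcal{Z}:\mathcal{X}-x_i)\le 4\,\boldsymbol\tau^\star_{\mathrm{lin}}(\mathcal{Z}:\mathcal{X}-x_j).$$
   Context: $\mathcal{X}=\{x_1,\dots,x_K\}\subset\mathbb{R}^d$, $\mathcal{Z}\subset\mathbb{R}^d$ finite, $\theta^\star\in\mathbb{R}^d$, and $z^\star$ the unique maximizer of $z^\top\theta^\star$ over $z\in\mathcal{Z}$. $\Delta^{(K)}$ is the probability simplex on $[K]$. Generalized inverse norm: for a positive semidefinite matrix $\mathbf A$ and $x\in\mathbb{R}^d$, $\|x\|_{\mathbf A^{-1}}:=\lim_{\lambda\to0^+}\sqrt{x^\top(\mathbf A+\lambda\mathbf I_d)^{-1}x}$ (equal to $+\infty$ if $x$ is not in the column space of $\mathbf A$). For $j\in[K]$ and $\mathbf p\in\Delta^{(K)}$, $\mathbf\Sigma_{-j,\mathbf p}:=\sum_{i=1}^Kp_i(x_i-x_j)(x_i-x_j)^\top$, and $$\boldsymbol\tau^\star_{\mathrm{lin}}(\mathcal{Z}:\mathcal{X}-x_j):=\min_{\mathbf p\in\Delta^{(K)}}\max_{z\in\mathcal{Z}\setminus\{z^\star\}}\frac{\|z^\star-z\|^2_{\mathbf\Sigma_{-j,\mathbf p}^{-1}}}{((z^\star-z)^\top\theta^\star)^2}$$ (with values in $[0,+\infty]$). *)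

(* Defs.v *)
From HB Require Import structures.
From mathcomp Require Import all_boot all_order all_algebra.
From mathcomp Require Import all_classical all_reals all_analysis.
Set Implicit Arguments. Unset Strict Implicit. Unset Printing Implicit Defensive.
Import Order.TTheory GRing.Theory Num.Theory.
Local Open Scope classical_set_scope.
Local Open Scope ring_scope.

Section Defs.
Variables (R : realType) (d : nat).

Definition qform (M : 'M[R]_d) (x : 'cV[R]_d) : R :=
  ((x^T *m M *m x) 0 0).

(* generalized inverse norm  ||x||_{A^{-1}} := lim_{l -> 0+} sqrt(x^T (A + l I)^{-1} x),
   valued in the extended reals (+oo when x is outside the column space of A) *)
Definition ginv_norm (A : 'M[R]_d) (x : 'cV[R]_d) : \bar R :=
  lim ((fun l : R => (Num.sqrt (qform (invmx (A + l%:M)) x))%:E) @ 0^'+).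

Definition Sigma_mj (K : nat) (X : 'I_K -> 'cV[R]_d) (j : 'I_K) (p : 'I_K -> R)
  : 'M[R]_d :=
  \sum_(i < K) p i *: ((X i - X j) *m (X i - X j)^T).

Definition simplex (K : nat) : set ('I_K -> R) :=
  [set p | (forall i, 0 <= p i) /\ \sum_(i < K) p i = 1].

Definition tau_obj (K : nat) (X : 'I_K -> 'cV[R]_d) (Z : seq 'cV[R]_d)
  (zs theta : 'cV[R]_d) (j : 'I_K) (p : 'I_K -> R) : \bar R :=
  \big[maxe/0%E]_(z <- undup Z | z != zs)
    (let n := ginv_norm (Sigma_mj X j p) (zs - z) in
     (n * n) * ((((zs - z)^T *m theta) 0 0) ^+ 2)^-1%:E)%E.

Definition tau_lin (K : nat) (X : 'I_K -> 'cV[R]_d) (Z : seq 'cV[R]_d)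
  (zs theta : 'cV[R]_d) (j : 'I_K) : \bar R :=
  ereal_inf [set tau_obj X Z zs theta j p | p in @simplex K].

End Defs.

(* Main.v *)
Require Import Defs.
From HB Require Import structures.
From mathcomp Require Import all_boot all_order all_algebra.
From mathcomp Require Import ring lra.
Import Order.TTheory GRing.Theory Num.Theory.
Local Open Scope ring_scope.
Set Implicit Arguments. Unset Strict Implicit. Unset Printing Implicit Defensive.

Section Mx.
Variables (R : realFieldType) (d : nat).
Implicit Types (M N : 'M[R]_d) (x y v w : 'cV[R]_d).

Definition sp x y : R := (x^T *m y) 0 0.
Definition qf M x : R := (x^T *m M *m x) 0 0.

Lemma qfE M x : qf M x = sp x (M *m x).
Proof. by rewrite /qf /sp mulmxA. Qed.

Lemma spC x y : sp x y = sp y x.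
Proof. rewrite /sp -[y^T *m x]trmxK trmx_mul trmxK [in RHS]mxE.
by congr (_ _ _); apply: val_inj. Qed.

Lemma spDr x y w : sp x (y + w) = sp x y + sp x w.
Proof. by rewrite /sp mulmxDr mxE. Qed.
Lemma spNr x y : sp x (- y) = - sp x y.
Proof. by rewrite /sp mulmxN mxE. Qed.
Lemma spZr (a : R) x y : sp x (a *: y) = a * sp x y.
Proof. by rewrite /sp -scalemxAr mxE. Qed.
Lemma spDl x y w : sp (y + w) x = sp y x + sp w x.
Proof. by rewrite spC spDr !(spC x). Qed.
Lemma spNl x y : sp (- y) x = - sp y x.
Proof. by rewrite spC spNr spC. Qed.
Lemma spZl (a : R) x y : sp (a *: y) x = a * sp y x.
Proof. by rewrite spC spZr spC. Qed.

Lemma spM M x y : M^T = M -> sp x (M *m y) = sp (M *m x) y.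
Proof.
move=> sM; by rewrite /sp mulmxA -{1}sM -trmx_mul.
Qed.

Lemma qf_unit M : (forall v, v != 0 -> 0 < qf M v) -> M \in unitmx.
Proof.
move=> pos; rewrite -row_free_unit -kermx_eq0; apply/eqP/row_matrixP => i.
rewrite row0; apply/eqP/negPn/negP => nz.
have := pos (row i (kermx M))^T; rewrite trmx_eq0 => /(_ nz).
rewrite /qf trmxK.
have /sub_kermxP -> : (row i (kermx M) <= kermx M)%MS by exact: row_sub.
by rewrite mul0mx mxE ltxx.
Qed.

Lemma qf_inv_ident M x v : M^T = M -> M \in unitmx ->
  qf (invmx M) x = qf M (v - invmx M *m x) - qf M v + 2 * sp v x.
Proof.
move=> sM uM; set w := invmx M *m x.
have Mw : M *m w = x by rewrite /w mulmxA mulmxV // mul1mx.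
rewrite !qfE mulmxBr Mw spDr spNr !spDl !spNl.
rewrite (spM w v sM) Mw -/w (spC x w) (spC x v); lra.
Qed.

Lemma qfZ M (a : R) x : qf M (a *: x) = a ^+ 2 * qf M x.
Proof. by rewrite !qfE -scalemxAr spZr spZl mulrA expr2. Qed.

Lemma qf0 M : qf M 0 = 0.
Proof. by rewrite qfE mulmx0 /sp mulmx0 mxE. Qed.

Lemma qf_inv_le M N x (c : R) : M^T = M -> N^T = N -> M \in unitmx ->
  N \in unitmx -> (forall v, 0 <= qf M v) -> 0 < c ->
  (forall v, c * qf M v <= qf N v) ->
  qf (invmx N) x <= c^-1 * qf (invmx M) x.
Proof.
move=> sM sN uM uN psd c0 le.
set v := invmx N *m x.
have e1 := qf_inv_ident x v sN uN.
rewrite subrr qf0 add0r in e1.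
have e2 := qf_inv_ident x (c *: v) sM uM.
rewrite qfZ spZl in e2.
have h1 := psd (c *: v - invmx M *m x).
have h2 := le v.
have h3 : - (c ^+ 2 * qf M v) + 2 * (c * sp v x) <= qf (invmx M) x by lra.
rewrite e1.
have ic : 0 <= c^-1 by rewrite invr_ge0 ltW.
have h4 := ler_wpM2l ic h3.
apply: le_trans h4.
have cn : c != 0 by rewrite gt_eqF.
have -> : c^-1 * (- (c ^+ 2 * qf M v) + 2 * (c * sp v x)) = - (c * qf M v) + 2 * sp v x.
  by field.
lra.
Qed.

Lemma sp_pos v : v != 0 -> 0 < sp v v.
Proof.
move=> nz; rewrite /sp mxE.
have pos : forall i : 'I_d, true -> 0 <= v^T 0 i * v i 0.
  by move=> i _; rewrite mxE -expr2 sqr_ge0.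
rewrite lt0r sumr_ge0 // andbT.
apply/negP => /eqP /(psumr_eq0P pos) H.
have: v = 0.
  apply/matrixP => i j; rewrite ord1 mxE.
  have := H i isT; rewrite mxE -expr2 => /eqP.
  by rewrite sqrf_eq0 => /eqP.
by move/eqP: nz.
Qed.

Lemma qf_addl M (l : R) v : qf (M + l%:M) v = qf M v + l * sp v v.
Proof. by rewrite !qfE mulmxDl spDr mul_scalar_mx spZr. Qed.

Lemma sym_addl M (l : R) : M^T = M -> (M + l%:M)^T = M + l%:M.
Proof. by move=> sM; rewrite linearD /= sM tr_scalar_mx. Qed.

Lemma unit_addl M (l : R) : (forall v, 0 <= qf M v) -> 0 < l -> M + l%:M \in unitmx.
Proof.
move=> psd l0; apply: qf_unit => v nz; rewrite qf_addl.
have := sp_pos nz; have := psd v; move=> a b.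
have : 0 < l * sp v v by apply: mulr_gt0.
lra.
Qed.
End Mx.

From mathcomp Require Import all_classical all_reals all_analysis.

Section Sig.
Variables (R : realType) (d K : nat) (X : 'I_K -> 'cV[R]_d).

Lemma qf_Sigma j p v : qf (Sigma_mj X j p) v = \sum_k p k * (sp (X k - X j) v) ^+ 2.
Proof.
rewrite /qf /Sigma_mj mulmx_sumr mulmx_suml summxE; apply: eq_bigr => k _.
rewrite -scalemxAr -scalemxAl mxE; congr (_ * _).
rewrite mulmxA -[(v^T *m _ *m _) *m v]mulmxA mxE big_ord1 expr2.
by rewrite -/(sp v _) -/(sp _ v) spC.
Qed.

Lemma Sigma_sym j p : (Sigma_mj X j p)^T = Sigma_mj X j p.
Proof.
rewrite /Sigma_mj (big_morph _ (raddfD (@trmx R d d)) (trmx0 _ _ _)).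
by apply: eq_bigr => k _; apply/matrixP => a b; rewrite !mxE; congr (_ * _); apply: eq_bigr => c _; rewrite !mxE mulrC.
Qed.

Lemma Sigma_psd j p : (forall k, 0 <= p k) -> forall v, 0 <= qf (Sigma_mj X j p) v.
Proof.
move=> p0 v; rewrite qf_Sigma; apply: sumr_ge0 => k _.
by rewrite mulr_ge0 ?sqr_ge0.
Qed.

Definition qmix (i j : 'I_K) (p : 'I_K -> R) : 'I_K -> R :=
  fun k => (p k + (k == j)%:R) / 2.

Lemma qmix_simplex i j p : p \in simplex (R:=R) (K:=K) -> qmix i j p \in simplex (R:=R) (K:=K).
Proof.
rewrite !inE /simplex /= => -[p0 p1]; split.
  by move=> k; rewrite /qmix divr_ge0 // addr_ge0.
rewrite /qmix -mulr_suml big_split /= p1.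
rewrite (bigD1 j) //= eqxx big1 ?addr0; first by rewrite -[1 + 1]/2%:R divff.
by move=> k /negPf ->.
Qed.

Lemma Sigma_loewner i j p : p \in simplex (R:=R) (K:=K) -> forall v,
  4^-1 * qf (Sigma_mj X j p) v <= qf (Sigma_mj X i (qmix i j p)) v.
Proof.
rewrite inE => -[p0 p1] v; rewrite !qf_Sigma.
set b := sp (X i - X j) v.
have E : forall k, sp (X k - X i) v = sp (X k - X j) v - b.
  move=> k; rewrite /b -spNl -spDl; congr sp.
  by rewrite opprB addrA subrK.
rewrite [X in _ <= X](eq_bigr (fun k => qmix i j p k * (sp (X k - X j) v - b) ^+ 2)); last by move=> k _; rewrite E.
rewrite /qmix.
under eq_bigr => k _ do rewrite !mulrDl.
rewrite big_split /= [X in _ <= _ + X](bigD1 j) //= eqxx [X in _ <= _ + (_ + X)]big1 ?addr0; last by move=> k /negPf ->; rewrite !mul0r.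
have -> : sp (X j - X j) v = 0 by rewrite subrr /sp trmx0 mul0mx mxE.
rewrite sub0r.
rewrite -/(sp _ _).
have H : \sum_k p k * sp (X k - X j) v ^+ 2 <=
  2 * \sum_k p k * (sp (X k - X j) v - b) ^+ 2 + 2 * b ^+ 2.
  have S : \sum_k p k * b ^+ 2 = b ^+ 2 by rewrite -mulr_suml p1 mul1r.
  rewrite -[in X in _ + 2 * X]S !mulr_sumr -big_split /=.
  apply: ler_sum => k _; have := mulr_ge0 (p0 k) (sqr_ge0 (sp (X k - X j) v - 2 * b)); nra.
have -> : \sum_k p k / 2 * (sp (X k - X j) v - b) ^+ 2 =
   2^-1 * \sum_k p k * (sp (X k - X j) v - b) ^+ 2.
  rewrite mulr_sumr; apply: eq_bigr => k _. ring.
rewrite sqrrN /=.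
lra.
Qed.
End Sig.

Section An.
Import numFieldNormedType.Exports.
Local Open Scope classical_set_scope.
Variables (R : realType) (d : nat).
Implicit Types (A B : 'M[R]_d) (x : 'cV[R]_d).

Lemma sqrt_le (a b : R) : a <= b -> Num.sqrt a <= Num.sqrt b.
Proof.
move=> ab; have [b0|b0] := leP 0 b; first by rewrite ler_sqrt.
rewrite !ltr0_sqrtr //; exact: le_lt_trans b0.
Qed.

Definition gfun A x (l : R) : \bar R := (Num.sqrt (qf (invmx (A + l%:M)) x))%:E.

Definition Ipos := [set` Interval (BRight (0:R)) (BInfty R false)].

Lemma psd_addl A (l : R) : (forall v, 0 <= qf A v) -> 0 <= l ->
  forall v, 0 <= qf (A + l%:M) v.
Proof.
move=> psd l0 v; rewrite qf_addl; apply: addr_ge0 => //.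
by apply: mulr_ge0 => //; rewrite /sp mxE; apply: sumr_ge0 => i _; rewrite mxE -expr2 sqr_ge0.
Qed.

Lemma gn_eq A x : A^T = A -> (forall v, 0 <= qf A v) ->
  ginv_norm A x = ereal_sup (gfun A x @` Ipos).
Proof.
move=> sA psd; rewrite /ginv_norm; apply: cvg_lim; first exact: ereal_hausdorff.
apply: (@nonincreasing_at_right_cvge _ (gfun A x) 0 (BInfty R false)) => //.
move=> l l'; rewrite !in_itv /= !andbT => l0 l'0 ll'.
rewrite lee_fin; apply: sqrt_le.
rewrite -[X in _ <= X]mul1r -{1}invr1.
apply: qf_inv_le => //.
- exact: sym_addl.
- exact: sym_addl.
- exact: unit_addl.
- exact: unit_addl.
- by apply: psd_addl => //; exact: ltW.
- move=> v; rewrite mul1r !qf_addl lerD2l; apply: ler_wpM2r => //.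
  by rewrite /sp mxE; apply: sumr_ge0 => i _; rewrite mxE -expr2 sqr_ge0.
Qed.

Lemma sp_ge0 (v : 'cV[R]_d) : 0 <= sp v v.
Proof. by rewrite /sp mxE; apply: sumr_ge0 => i _; rewrite mxE -expr2 sqr_ge0. Qed.

Lemma gn_le A B x : A^T = A -> B^T = B -> (forall v, 0 <= qf A v) ->
  (forall v, 0 <= qf B v) -> (forall v, 4^-1 * qf A v <= qf B v) ->
  (ginv_norm B x <= 2%:E * ginv_norm A x)%E.
Proof.
move=> sA sB pA pB le; rewrite !gn_eq //.
apply: ge_ereal_sup => _ [l l0 <-].
have l0' : 0 < l by move: l0; rewrite /Ipos /= in_itv /= andbT.
have l4 : Ipos (4 * l) by rewrite /Ipos /= in_itv /= andbT mulr_gt0.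
apply: (@le_trans _ _ (2%:E * gfun A x (4 * l))%E); last first.
  by apply: lee_wpmul2l => //; apply: ereal_sup_ubound; exists (4 * l).
rewrite /gfun -EFinM lee_fin.
have h : qf (invmx (B + l%:M)) x <= 4^-1^-1 * qf (invmx (A + (4 * l)%:M)) x.
  apply: qf_inv_le => //.
  - exact: sym_addl.
  - exact: sym_addl.
  - by apply: unit_addl => //; rewrite mulr_gt0.
  - exact: unit_addl.
  - by apply: psd_addl => //; rewrite ltW // mulr_gt0.
  - move=> v; rewrite !qf_addl mulrDr; have E : 4^-1 * ((4 * l) * sp v v) = l * sp v v by field. rewrite E; have := le v; lra.
rewrite invrK in h.
apply: (le_trans (sqrt_le h)).
have -> : (4:R) = 2 ^+ 2 by rewrite expr2; lra.
by rewrite sqrtrM ?sqr_ge0 // sqrtr_sqr ger0_norm.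
Qed.
End An.

Section Fin.
Import numFieldNormedType.Exports.
Local Open Scope classical_set_scope.
Variables (R : realType) (d : nat).

Lemma gn_ge0 (A : 'M[R]_d) x : A^T = A -> (forall v, 0 <= qf A v) ->
  (0 <= ginv_norm A x)%E.
Proof.
move=> sA psd; rewrite gn_eq //.
apply: (@le_trans _ _ (gfun A x 1)); first by rewrite lee_fin sqrtr_ge0.
by apply: ereal_sup_ubound; exists 1 => //; rewrite /Ipos /= in_itv /= andbT.
Qed.

Lemma tau_obj_le K (X : 'I_K -> 'cV[R]_d) Z zs theta (i j : 'I_K) p :
  p \in simplex (R:=R) (K:=K) ->
  (tau_obj X Z zs theta i (qmix i j p) <= 4%:E * tau_obj X Z zs theta j p)%E.
Proof.
move=> ps; have qs := qmix_simplex i j ps.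
move: (ps) (qs); rewrite !inE => -[p0 _] [q0 _].
suff [] : (tau_obj X Z zs theta i (qmix i j p) <= 4%:E * tau_obj X Z zs theta j p /\ 0 <= tau_obj X Z zs theta j p)%E by [].
rewrite /tau_obj.
apply: (@big_rec2 _ _ (fun y1 y2 : \bar R => y1 <= 4%:E * y2 /\ 0 <= y2)%E) => [|z y1 y2 _ [h1 h2]].
  by rewrite mule0.
set c := (_ ^-1)%:E.
have c0 : (0 <= c)%E by rewrite lee_fin invr_ge0 sqr_ge0.
set n1 := ginv_norm (Sigma_mj X i (qmix i j p)) (zs - z).
set n2 := ginv_norm (Sigma_mj X j p) (zs - z).
have n10 : (0 <= n1)%E by apply: gn_ge0; [exact: Sigma_sym|exact: Sigma_psd].
have n20 : (0 <= n2)%E by apply: gn_ge0; [exact: Sigma_sym|exact: Sigma_psd].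
have le12 : (n1 <= 2%:E * n2)%E.
  apply: (gn_le (zs - z) (Sigma_sym X j p) (Sigma_sym X i (qmix i j p)) (Sigma_psd X j p0) (Sigma_psd X i q0)).
  exact: (Sigma_loewner X i j ps).
have F0 : (0 <= n2 * n2 * c)%E by rewrite mule_ge0 // mule_ge0.
split; first last.
  by rewrite le_max F0.
rewrite ge_max; apply/andP; split; last first.
  apply: (le_trans h1); apply: lee_wpmul2l => //; by rewrite le_max lexx orbT.
apply: (@le_trans _ _ (4%:E * (n2 * n2 * c)))%E; last first.
  by apply: lee_wpmul2l => //; rewrite le_max lexx.
have -> : (4%:E * (n2 * n2 * c) = (2%:E * n2) * (2%:E * n2) * c)%E.
  rewrite !muleA; congr (_ * _)%E.
  rewrite (muleC _ (2%:E)) !muleA -EFinM; congr (_ * _ * _)%E.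
  have -> : (2 * 2 : R) = 4 by lra.
  reflexivity.
apply: lee_wpmul2r => //.
exact: (lee_pmul n10 n10 le12 le12).
Qed.
End Fin.

Unset Implicit Arguments.
Set Strict Implicit.
Theorem mainTheorem2 (R : realType) (d K : nat) (X : 'I_K -> 'cV[R]_d)
  (Z : seq 'cV[R]_d) (theta zs : 'cV[R]_d)
  (zs_in : zs \in Z)
  (zs_unique : forall z, z \in Z -> z != zs ->
     ((z^T *m theta) 0 0) < ((zs^T *m theta) 0 0))
  (i j : 'I_K) :
  (tau_lin X Z zs theta i <= 4%:E * tau_lin X Z zs theta j)%E.
Proof.
have H : (4^-1%:E * tau_lin X Z zs theta i <= tau_lin X Z zs theta j)%E.
  apply: le_ereal_inf_tmp => _ [p ps <-].
  have le := tau_obj_le X Z zs theta i j (mem_set ps).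
  have le2 : (tau_lin X Z zs theta i <= 4%:E * tau_obj X Z zs theta j p)%E.
    apply: le_trans le; apply: ereal_inf_lbound; exists (qmix i j p) => //.
    exact/set_mem/qmix_simplex/mem_set.
  have h4 : (0 <= (4^-1 : R)%:E)%E by rewrite lee_fin invr_ge0.
  have := lee_wpmul2l h4 le2.
  rewrite muleA -EFinM mulVf ?mul1e //.
have h4 : (0 <= (4 : R)%:E)%E by rewrite lee_fin.
have := lee_wpmul2l h4 H.
rewrite muleA -EFinM mulfV ?mul1e //.
Qed.
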